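(* Assume CH. Then there is no separable regular Baire $\sigma$-space $X$ with $dis(X)<\Delta(X)$.
   Context: All spaces are Hausdorff. CH is the Continuum Hypothesis $2^{\aleph_0}=\aleph_1$. $dis(X)$ is the least number of discrete subspaces needed to cover $X$; $\Delta(X)$ is the least cardinality of a non-empty open subset of $X$. A $\sigma$-space is a space having a $\sigma$-discrete network (a network being a family $\mathcal{N}$ of subsets such that for every open $U$ and $x\in U$ there is $N\in\mathcal{N}$ with $x\in N\subseteq U$). *)

(* Defs.v *)
From Stdlib Require Import Classical.

Set Implicit Arguments.

Record topology (X : Type) := Topology {
  is_open : (X -> Prop) -> Prop;
  open_full : is_open (fun _ => True);
  open_inter : forall U V, is_open U -> is_open V -> is_open (fun x => U x /\ V x);
  open_union : forall F : (X -> Prop) -> Prop,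
      (forall U, F U -> is_open U) -> is_open (fun x => exists U, F U /\ U x)
}.

Section Topo.
Context {X : Type} (T : topology X).

Definition is_closed (F : X -> Prop) : Prop := is_open T (fun x => ~ F x).

Definition hausdorff : Prop :=
  forall x y : X, x <> y -> exists U V, is_open T U /\ is_open T V /\ U x /\ V y /\
    (forall z, U z -> V z -> False).

Definition regular : Prop :=
  hausdorff /\
  forall (F : X -> Prop) (x : X), is_closed F -> ~ F x ->
    exists U V, is_open T U /\ is_open T V /\ U x /\ (forall z, F z -> V z) /\
      (forall z, U z -> V z -> False).

Definition countable_set (D : X -> Prop) : Prop :=
  exists f : X -> nat, forall x y, D x -> D y -> f x = f y -> x = y.

Definition dense (D : X -> Prop) : Prop :=
  forall U, is_open T U -> (exists x, U x) -> exists x, U x /\ D x.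

Definition separable : Prop := exists D, countable_set D /\ dense D.

Definition baire : Prop :=
  forall U : nat -> X -> Prop, (forall n, is_open T (U n) /\ dense (U n)) ->
    dense (fun x => forall n, U n x).

Definition discrete_family (N : (X -> Prop) -> Prop) : Prop :=
  forall x, exists V, is_open T V /\ V x /\
    forall A B, N A -> N B -> (exists y, V y /\ A y) -> (exists y, V y /\ B y) ->
      forall z, A z <-> B z.

Definition network (N : (X -> Prop) -> Prop) : Prop :=
  forall U x, is_open T U -> U x -> exists A, N A /\ A x /\ forall z, A z -> U z.

Definition sigma_space : Prop :=
  exists N : nat -> (X -> Prop) -> Prop,
    (forall n, discrete_family (N n)) /\ network (fun A => exists n, N n A).

Definition discrete_subspace (D : X -> Prop) : Prop :=
  forall x, D x -> exists V, is_open T V /\ V x /\ forall y, V y -> D y -> y = x.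

Definition card_lt_set (I : Type) (U : X -> Prop) : Prop :=
  (exists f : I -> X, (forall i, U (f i)) /\ forall i j, f i = f j -> i = j) /\
  ~ (exists g : X -> I, forall x y, U x -> U y -> g x = g y -> x = y).

(** dis(X) < Δ(X): X is covered by a family of discrete subspaces indexed by
    some I whose cardinality is strictly below the cardinality of every
    non-empty open set.  (Since cardinals are well-ordered, this is exactly
    "min #discrete cover < min |U| over nonempty open U".) *)
Definition dis_lt_Delta : Prop :=
  exists (I : Type) (D : I -> X -> Prop),
    (forall i, discrete_subspace (D i)) /\
    (forall x, exists i, D i x) /\
    (forall U, is_open T U -> (exists x, U x) -> card_lt_set I U).

End Topo.

(** CH: every subset of 2^ω is countable or equinumerous (has an injection
    from) 2^ω; i.e. 2^{ℵ0} = ℵ1. *)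
Definition CH : Prop :=
  forall A : (nat -> bool) -> Prop,
    (exists f : (nat -> bool) -> nat, forall x y, A x -> A y -> f x = f y -> x = y) \/
    (exists g : (nat -> bool) -> (nat -> bool),
        (forall x, A (g x)) /\ forall x y, g x = g y -> x = y).

(* Main.v *)
Require Import Defs.
From Stdlib Require Import Classical ClassicalEpsilon FunctionalExtensionality PropExtensionality Arith Cantor.

Section Helpers.
Context {X : Type} (T : topology X).

Lemma open_ext (P Q : X -> Prop) : is_open T P -> (forall x, P x <-> Q x) -> is_open T Q.
Proof.
  intros HP H.
  assert (E : P = Q).
  { apply functional_extensionality; intro x; apply propositional_extensionality; auto. }
  subst; auto.
Qed.

Lemma open_local (P : X -> Prop) :
  (forall x, P x -> exists O, is_open T O /\ O x /\ forall z, O z -> P z) -> is_open T P.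
Proof.
  intros H.
  apply open_ext with (fun x => exists U, (is_open T U /\ forall z, U z -> P z) /\ U x).
  - apply open_union. intros U [HU _]; auto.
  - intro x; split.
    + intros [U [[_ HU] Ux]]; auto.
    + intros Px. destruct (H x Px) as [O [HO [Ox HOP]]]. exists O; auto.
Qed.

Lemma card_le_c : regular T -> separable T -> sigma_space T ->
  exists c : X -> (nat -> bool), forall x y, c x = c y -> x = y.
Proof.
  intros [Hh Hr] [Q [[e He] Hd]] [N [HN Hnet]].
  assert (HD : forall n x, {V | is_open T V /\ V x /\ forall A B, N n A -> N n B ->
      (exists y, V y /\ A y) -> (exists y, V y /\ B y) -> forall z, A z <-> B z}).
  { intros n x; apply constructive_indefinite_description; apply HN. }
  pose (Dn := fun n x => proj1_sig (HD n x)).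
  assert (HW : forall n x, {W | is_open T W /\ W x /\ forall y, ~ Dn n x y ->
      exists V, is_open T V /\ V y /\ forall z, W z -> V z -> False}).
  { intros n x; apply constructive_indefinite_description.
    destruct (proj2_sig (HD n x)) as [Ho [Hx _]].
    destruct (Hr (fun z => ~ Dn n x z) x) as [U [V [HU [HV [Ux [FV Hdis]]]]]].
    - unfold is_closed. apply open_ext with (Dn n x); [exact Ho|].
      intro z; split; [intros H1 H2; auto | apply NNPP].
    - intro H; apply H; exact Hx.
    - exists U; split; [auto|split; [auto|]].
      intros y Hy. exists V; split; [auto|split; [auto|]]. intros z Uz Vz; eauto. }
  pose (W := fun n x => proj1_sig (HW n x)).
  pose (code := fun x m =>
    let p := Cantor.of_nat m in
    match snd p with
    | 0 => if excluded_middle_informative (exists A, N (fst p) A /\ A x) then true else false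
    | S k => if excluded_middle_informative (exists q, Q q /\ W (fst p) x q /\ e q = k)
             then true else false
    end).
  exists code. intros x y Hxy. apply NNPP; intro Hne.
  destruct (Hh x y Hne) as [U [V [HU [HV [Ux [Vy Hdis]]]]]].
  destruct (Hnet U x HU Ux) as [A [[n HA] [Ax AU]]].
  assert (nAy : ~ A y) by (intro H; apply (Hdis y); auto).
  assert (H0 := f_equal (fun c => c (Cantor.to_nat (n, 0))) Hxy).
  cbv beta in H0. unfold code in H0. cbv beta zeta in H0. rewrite Cantor.cancel_of_to in H0. simpl in H0.
  destruct (excluded_middle_informative (exists A, N n A /\ A x)) as [_|Hn];
    [| exfalso; apply Hn; eauto].
  destruct (excluded_middle_informative (exists A, N n A /\ A y)) as [[A' [NA' A'y]]|_];
    [| discriminate].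
  assert (Htr : forall k, (exists q, Q q /\ W n x q /\ e q = k) ->
                          (exists q, Q q /\ W n y q /\ e q = k) ).
  { intros k Hk.
    assert (H1 := f_equal (fun c => c (Cantor.to_nat (n, S k))) Hxy).
    cbv beta in H1. unfold code in H1. cbv beta zeta in H1. rewrite Cantor.cancel_of_to in H1. simpl in H1.
    destruct (excluded_middle_informative (exists q, Q q /\ W n x q /\ e q = k)); [|contradiction].
    destruct (excluded_middle_informative (exists q, Q q /\ W n y q /\ e q = k)); [auto|discriminate]. }
  assert (Htr' : forall k, (exists q, Q q /\ W n y q /\ e q = k) ->
                          (exists q, Q q /\ W n x q /\ e q = k) ).
  { intros k Hk.
    assert (H1 := f_equal (fun c => c (Cantor.to_nat (n, S k))) Hxy).
    cbv beta in H1. unfold code in H1. cbv beta zeta in H1. rewrite Cantor.cancel_of_to in H1. simpl in H1.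
    destruct (excluded_middle_informative (exists q, Q q /\ W n y q /\ e q = k)); [|contradiction].
    destruct (excluded_middle_informative (exists q, Q q /\ W n x q /\ e q = k)); [auto|discriminate]. }
  assert (Dy : Dn n x y).
  { apply NNPP; intro Hny.
    destruct (proj2_sig (HW n x)) as [_ [_ Hsep]].
    destruct (Hsep y Hny) as [V' [HV' [V'y Hd']]].
    destruct (proj2_sig (HW n y)) as [HWy [Wyy _]].
    destruct (Hd (fun z => V' z /\ W n y z)) as [q [[V'q Wq] Qq]].
    - apply open_inter; auto.
    - exists y; split; auto.
    - destruct (Htr' (e q)) as [q' [Qq' [Wq' Heq]]]; [exists q; auto|].
      assert (q' = q) by (apply He; auto). subst q'.
      apply (Hd' q); auto. }
  destruct (proj2_sig (HD n x)) as [_ [Dx Hdf]].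
  apply nAy. apply (Hdf A' A NA' HA); [exists y; split; auto | exists x; split; auto | auto].
Qed.

Lemma countable_case (I : Type) (D : I -> X -> Prop) (N : nat -> (X -> Prop) -> Prop)
  (h : I -> nat) :
  hausdorff T -> baire T -> (forall n, discrete_family T (N n)) ->
  network T (fun A => exists n, N n A) -> inhabited X ->
  (forall i, discrete_subspace T (D i)) -> (forall x, exists i, D i x) ->
  (forall i j, h i = h j -> i = j) ->
  (forall U, is_open T U -> (exists x, U x) -> card_lt_set I U) -> False.
Proof.
  intros Hh Hb HN Hnet [x0] Hdisc Hcov Hinj Hcard.
  pose (E := fun i n x => D i x /\ exists A, N n A /\ A x /\ forall z, A z -> D i z -> z = x).
  pose (G := fun m x => exists i n, Cantor.to_nat (h i, n) = m /\ E i n x).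
  assert (cov : forall x, exists m, G m x).
  { intro x. destruct (Hcov x) as [i Dx].
    destruct (Hdisc i x Dx) as [V [HV [Vx HVu]]].
    destruct (Hnet V x HV Vx) as [A [[n NA] [Ax AV]]].
    exists (Cantor.to_nat (h i, n)), i, n. split; [reflexivity|]. split; [exact Dx|].
    exists A. split; [exact NA|]. split; [exact Ax|]. intros z Az Dz. apply HVu; auto. }
  assert (loc : forall m z, exists V, is_open T V /\ V z /\
     forall y1 y2, V y1 -> V y2 -> G m y1 -> G m y2 -> y1 = y2).
  { intros m z.
    destruct (classic (exists i n, Cantor.to_nat (h i, n) = m)) as [[i [n Hm]] | Hno].
    - destruct (HN n z) as [V [HV [Vz HVd]]]. exists V. split; auto. split; auto.
      intros y1 y2 V1 V2 [i1 [n1 [Hm1 [D1 [A1 [NA1 [A1y1 HA1]]]]]]]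
        [i2 [n2 [Hm2 [D2 [A2 [NA2 [A2y2 HA2]]]]]]].
      assert (P1 : (h i1, n1) = (h i, n)).
      { rewrite <- (Cantor.cancel_of_to (h i1, n1)), <- (Cantor.cancel_of_to (h i, n)). congruence. }
      assert (P2 : (h i2, n2) = (h i, n)).
      { rewrite <- (Cantor.cancel_of_to (h i2, n2)), <- (Cantor.cancel_of_to (h i, n)). congruence. }
      injection P1; injection P2; intros; subst n1 n2.
      assert (i1 = i) by (apply Hinj; auto). assert (i2 = i) by (apply Hinj; auto). subst i1 i2.
      symmetry. apply HA1; auto.
      apply (HVd A2 A1 NA2 NA1); [exists y2 | exists y1 |]; auto.
    - exists (fun _ => True). split; [apply open_full|]. split; auto.
      intros y1 y2 _ _ [i [n [Hm _]]]. exfalso; apply Hno; eauto. }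
  assert (opn : forall m, is_open T (fun x => ~ G m x)).
  { intro m. apply open_local. intros x Hx.
    destruct (loc m x) as [V [HV [Vx Hu]]].
    destruct (classic (exists y, V y /\ G m y)) as [[y [Vy Gy]] | Hn].
    - assert (Hne : x <> y) by (intro; subst; auto).
      destruct (Hh x y Hne) as [P [P' [HP [HP' [Px [P'y Hd]]]]]].
      exists (fun z => V z /\ P z). split; [apply open_inter; auto|]. split; auto.
      intros z [Vz Pz] Gz. assert (z = y) by (apply Hu; auto). subst z. apply (Hd y); auto.
    - exists V. split; auto. split; auto. intros z Vz Gz. apply Hn; eauto. }
  assert (dns : forall m, dense T (fun x => ~ G m x)).
  { intros m W HW [w Ww]. apply NNPP; intro Hno.
    assert (HG : forall x, W x -> G m x).
    { intros x Wx. apply NNPP; intro. apply Hno; eauto. }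
    destruct (loc m w) as [V [HV [Vw Hu]]].
    destruct (Hcard (fun x => W x /\ V x)) as [_ Hnog].
    - apply open_inter; auto.
    - exists w; auto.
    - destruct (Hcov w) as [i0 _]. apply Hnog. exists (fun _ => i0).
      intros x y [Wx Vx] [Wy Vy] _. apply Hu; auto. }
  destruct (Hb (fun m x => ~ G m x) (fun m => conj (opn m) (dns m)) (fun _ => True))
    as [x [_ Hx]].
  - apply open_full.
  - exists x0; auto.
  - destruct (cov x) as [m Gm]. apply (Hx m Gm).
Qed.

End Helpers.

Theorem mainTheorem12 :
  CH ->
  forall (X : Type) (T : topology X),
    inhabited X ->
    regular T -> separable T -> baire T -> sigma_space T ->
    ~ dis_lt_Delta T.
Proof.
  intros HCH X T Hinh Hreg Hsep Hbai Hsig [J [D [Hdisc [Hcov Hcard]]]].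
  destruct (card_le_c T Hreg Hsep Hsig) as [c Hc].
  destruct (classic (exists h : J -> nat, forall i j, h i = h j -> i = j)) as [[h Hh] | Hnc].
  - destruct Hsig as [N [HN Hnet]].
    exact (@countable_case X T J D N h (proj1 Hreg) Hbai HN Hnet Hinh Hdisc Hcov Hh Hcard).
  - destruct Hinh as [x0].
    destruct (Hcard (fun _ => True) (open_full T) (ex_intro _ x0 Logic.I)) as [[f [_ Hf]] Hnog].
    destruct (HCH (fun s => exists j, c (f j) = s)) as [[F HF] | [g [Hg Hginj]]].
    + apply Hnc. exists (fun j => F (c (f j))). intros i j H. apply Hf, Hc. apply HF; eauto.
    + apply Hnog.
      assert (Hx : forall x, exists j, c (f j) = g (c x)) by (intro; apply Hg).
      exists (fun x => proj1_sig (constructive_indefinite_description _ (Hx x))).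
      intros x y _ _.
      destruct (constructive_indefinite_description _ (Hx x)) as [jx Hjx].
      destruct (constructive_indefinite_description _ (Hx y)) as [jy Hjy].
      simpl. intro Heq. subst jy.
      apply Hc, Hginj. congruence.
Qed.
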